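(* The set $\mathfrak{I}_{W} = \{ c_d^2, c_{(d-1)d}^2,\dots, c_{12}^2\}$ separates orbits for the action of $W_d(\mathbb{C})$ on $L$ and is a generating set for the field $\mathbb{C}(L)^{W_d(\mathbb{C})}$.
   Context: Let $d\ge 2$. Let $L\subset \mathbb{C}^d\oplus \mathfrak{so}(d,\mathbb{C})$ (where $\mathfrak{so}(d,\mathbb{C})$ is the space of complex skew-symmetric $d\times d$ matrices) be the linear subspace of pairs $(v,M)$ with $v=(0,\dots,0,c_d)^\top$ and $M$ the skew-symmetric tridiagonal matrix whose only possibly nonzero entries are $M_{i,i+1}=c_{i(i+1)}=-M_{i+1,i}$ for $1\le i\le d-1$. Let $W_d(\mathbb{C})$ be the group of diagonal $d\times d$ matrices with diagonal entries $w_i\in\{-1,1\}$; it acts on $L$ by $D\cdot(v,M)=(Dv,DMD^\top)$, i.e. $c_d\mapsto w_dc_d$ and $c_{i(i+1)}\mapsto w_iw_{i+1}c_{i(i+1)}$. The functions $c_d^2, c_{i(i+1)}^2$ are $W_d(\mathbb{C})$-invariant functions on $L$. $\mathbb{C}(L)^{W_d(\mathbb{C})}$ denotes the field of $W_d(\mathbb{C})$-invariant rational functions on $L$. A set of rational invariants separates orbits (is separating) if there is a non-empty Zariski-open subset of $L$ on which two points lie in the same orbit if and only if all functions in the set agree on them; here one can take the open subset where $c_d\neq0$ and all $c_{i(i+1)}\neq0$. *)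

(* Defs.v *)
From HB Require Import structures.
From mathcomp Require Import all_boot all_order all_algebra.
From mathcomp Require Import reals.
From mathcomp Require Import complex.
From mathcomp Require Import mpoly.
Set Implicit Arguments. Unset Strict Implicit. Unset Printing Implicit Defensive.
Import Order.TTheory GRing.Theory Num.Theory.
Local Open Scope ring_scope.

Definition CC (R : realType) := complex R.

Section Defs.
Variables (R : realType) (d : nat).
Local Notation C := (CC R).

(* Coordinates of L: a point of L is given by c : 'I_d -> C, where
   c i (i.+1 < d) is the coordinate c_{(i+1)(i+2)} and c (d-1) is c_d. *)
Definition L_vec (c : 'I_d -> C) : 'cV[C]_d :=
  \col_i (if val i == d.-1 then c i else 0).
Definition L_mat (c : 'I_d -> C) : 'M[C]_d :=
  \matrix_(i, j) (if val j == (val i).+1 then c i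
                  else if val i == (val j).+1 then - c j else 0).
(* the embedding of L into C^d (+) so(d,C) *)
Definition L_pt (c : 'I_d -> C) : 'cV[C]_d * 'M[C]_d := (L_vec c, L_mat c).

(* W_d(C): diagonal matrices with entries w_i = (-1)^(s i), s : 'I_d -> bool *)
Definition W_sign (s : {ffun 'I_d -> bool}) (i : 'I_d) : C := (-1) ^+ s i.
Definition W_mat (s : {ffun 'I_d -> bool}) : 'M[C]_d :=
  diag_mx (\row_i W_sign s i).
Definition W_act (s : {ffun 'I_d -> bool}) (x : 'cV[C]_d * 'M[C]_d)
  : 'cV[C]_d * 'M[C]_d :=
  (W_mat s *m x.1, W_mat s *m x.2 *m (W_mat s)^T).

(* induced action on coordinates: c_d |-> w_d c_d,
   c_{i(i+1)} |-> w_i w_{i+1} c_{i(i+1)} *)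
Definition coord_sign (s : {ffun 'I_d -> bool}) (i : 'I_d) : C :=
  if ((val i).+1 < d)%N then W_sign s i * W_sign s (insubd i (val i).+1)
  else W_sign s i.

(* action of W on the coordinate ring C[L] = {mpoly C[d]}: (w.p)(x) = p(w x) *)
Definition W_poly (s : {ffun 'I_d -> bool}) (p : {mpoly C[d]}) : {mpoly C[d]} :=
  p \mPo [tuple (coord_sign s i) *: 'X_i | i < d].

(* a rational function on L is represented by a pair (p, q), q != 0, meaning
   p / q in C(L) = Frac C[L]; p/q = p'/q' iff p q' = p' q. *)
Definition W_invariant_rat (p q : {mpoly C[d]}) : Prop :=
  forall s, W_poly s p * q = p * W_poly s q.

(* the subfield C(c_d^2, c_{(d-1)d}^2, ..., c_{12}^2) of C(L):
   p / q = P(c^2) / Q(c^2) with Q(c^2) != 0 *)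
Definition squares : d.-tuple {mpoly C[d]} := [tuple 'X_i ^+ 2 | i < d].
Definition in_field_of_squares (p q : {mpoly C[d]}) : Prop :=
  exists P Q : {mpoly C[d]},
    Q \mPo squares != 0 /\ p * (Q \mPo squares) = q * (P \mPo squares).

End Defs.

(* Main.v *)
Require Import Defs.
From HB Require Import structures.
From mathcomp Require Import all_boot all_order all_algebra.
From mathcomp Require Import reals complex mpoly.
From mathcomp Require Import zify.
Import Order.TTheory GRing.Theory Num.Theory.
Local Open Scope ring_scope.
Set Implicit Arguments. Unset Strict Implicit. Unset Printing Implicit Defensive.

Section A.
Variables (R : realType) (d : nat).
Local Notation C := (CC R).
Local Notation W_sign := (@W_sign R d).
Local Notation coord_sign := (@coord_sign R d).
Local Notation W_poly := (@W_poly R d).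

Lemma comp_mpolyA n k l (p : {mpoly C[n]}) (t1 : n.-tuple {mpoly C[k]})
  (t2 : k.-tuple {mpoly C[l]}) :
  (p \mPo t1) \mPo t2 = p \mPo [tuple (tnth t1 i \mPo t2) | i < n].
Proof.
rewrite [p \mPo t1]comp_mpolyE [RHS]comp_mpolyE raddf_sum /=.
apply: eq_bigr => m _; rewrite comp_mpolyZ rmorph_prod /=; congr (_ *: _).
by apply: eq_bigr => i _; rewrite rmorphXn /= tnth_map tnth_ord_tuple.
Qed.

Definition flip (e : 'I_d -> C) (p : {mpoly C[d]}) :=
  p \mPo [tuple e i *: 'X_i | i < d].

Lemma flip_ext e e' p : (forall i, e i = e' i) -> flip e p = flip e' p.
Proof.
move=> H; rewrite /flip.
have -> : [tuple e i *: 'X_i | i < d] = [tuple e' i *: 'X_i | i < d] :> d.-tuple {mpoly C[d]}.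
  by apply: eq_mktuple => i; rewrite H.
by [].
Qed.

Lemma flip_flip e e' p : flip e (flip e' p) = flip (fun i => e' i * e i) p.
Proof.
rewrite /flip comp_mpolyA.
have -> : [tuple tnth [tuple e' i *: 'X_i | i < d] i \mPo [tuple e i *: 'X_i | i < d] | i < d]
   = [tuple (e' i * e i) *: 'X_i | i < d] :> d.-tuple {mpoly C[d]}.
  apply: eq_mktuple => i.
  by rewrite tnth_map tnth_ord_tuple comp_mpolyZ comp_mpolyXU -tnth_nth tnth_map tnth_ord_tuple scalerA.
by [].
Qed.

Lemma flip1 e p : (forall i, e i = 1) -> flip e p = p.
Proof.
move=> H; rewrite /flip.
have -> : [tuple e i *: 'X_i | i < d] = [tuple 'X_i | i < d] :> d.-tuple {mpoly C[d]}.
  by apply: eq_mktuple => i; rewrite H scale1r.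
exact: comp_mpoly_id.
Qed.

Lemma flipE e p : flip e p =
  \sum_(m <- msupp p) (p@_m * \prod_i e i ^+ m i) *: 'X_[m].
Proof.
rewrite /flip comp_mpolyE; apply: eq_bigr => m _.
rewrite -scalerA; congr (_ *: _).
rewrite mpolyXE_id -scaler_prod; apply: eq_bigr => i _.
by rewrite tnth_map tnth_ord_tuple exprZn.
Qed.

Lemma coef_sum_supp (p : {mpoly C[d]}) (g : 'X_{1..d} -> C) m :
  (\sum_(m' <- msupp p) (p@_m' * g m') *: 'X_[m'])@_m = p@_m * g m.
Proof.
rewrite raddf_sum /=.
under eq_bigr => m' _ do rewrite mcoeffZ mcoeffX.
case: (boolP (m \in msupp p)) => Hm.
  rewrite (big_rem m Hm) /= eqxx mulr1 big1_seq ?addr0 // => m' /andP [_ Hm'].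
  have : m' != m by move: Hm'; rewrite mem_rem_uniq ?msupp_uniq // inE => /andP[].
  by move/negbTE ->; rewrite mulr0.
rewrite (memN_msupp_eq0 Hm) mul0r big1_seq // => m' /andP [_ Hm'].
have -> : (m' == m) = false by apply/negbTE; apply: contraNneq Hm => <-.
by rewrite mulr0.
Qed.

Lemma flip_coef e p m : (flip e p)@_m = p@_m * \prod_i e i ^+ m i.
Proof. by rewrite flipE coef_sum_supp. Qed.


Definition e1 (i : 'I_d) (j : 'I_d) : C := if j == i then -1 else 1.

Lemma even_poly (f : {mpoly C[d]}) :
  (forall i, flip (e1 i) f = f) -> exists P, f = P \mPo squares R d.
Proof.
move=> H.
have Hev : forall m, m \in msupp f -> forall i, ~~ odd (m i).
  move=> m Hm i; apply/negP => Hodd.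
  have := H i => /(congr1 (mcoeff m)); rewrite flip_coef.
  rewrite (bigD1 i) //= big1 => [|j /negbTE Hj]; last by rewrite /e1 Hj expr1n.
  rewrite mulr1 /e1 eqxx -signr_odd Hodd expr1.
  move=> E; move: Hm; rewrite mcoeff_msupp => /negP; apply.
  have : f@_m * 2%:R == 0 by rewrite mulr_natr mulr2n -{1}E mulrN1 addNr.
  by rewrite mulf_eq0 pnatr_eq0 orbF.
exists (\sum_(m <- msupp f) f@_m *: 'X_[[multinom (m i)./2 | i < d]]).
rewrite raddf_sum /= {1}[f]mpolyE; apply: eq_big_seq => m Hm.
rewrite comp_mpolyZ comp_mpolyX mpolyXE_id; congr (_ *: _).
apply: eq_bigr => i _.
rewrite tnth_map tnth_ord_tuple mnmE -exprM mul2n.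
by rewrite -{1}(odd_double_half (m i)) (negbTE (Hev m Hm i)) add0n.
Qed.


Lemma W_sign_sq s i : W_sign s i * W_sign s i = 1 :> C.
Proof. by rewrite /W_sign -signr_addb addbb. Qed.

Lemma coord_sign_sq s i : coord_sign s i * coord_sign s i = 1 :> C.
Proof.
rewrite /coord_sign; case: ifP => _; last exact: W_sign_sq.
by rewrite mulrACA !W_sign_sq mulr1.
Qed.

Definition sxor (s t : {ffun 'I_d -> bool}) : {ffun 'I_d -> bool} :=
  [ffun i => s i (+) t i].

Lemma coord_sign_xor s t i :
  coord_sign (sxor s t) i = coord_sign s i * coord_sign t i.
Proof.
rewrite /coord_sign /W_sign !ffunE !signr_addb.
by case: ifP => _ //; rewrite mulrACA.
Qed.

Lemma W_poly_comp s t p : W_poly t (W_poly s p) = W_poly (sxor s t) p.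
Proof.
rewrite /W_poly -!/(flip _ _) flip_flip; apply: flip_ext => i.
by rewrite coord_sign_xor.
Qed.

Lemma W_poly_inv s p : W_poly s (W_poly s p) = p.
Proof.
rewrite /W_poly -!/(flip _ _) flip_flip; apply: flip1 => i.
exact: coord_sign_sq.
Qed.

Lemma W_poly_neq0 s p : p != 0 -> W_poly s p != 0.
Proof.
apply: contraNneq => H; by rewrite -(W_poly_inv s p) H /W_poly comp_mpoly0.
Qed.

Lemma W_polyM s p q : W_poly s (p * q) = W_poly s p * W_poly s q.
Proof. by rewrite /W_poly rmorphM. Qed.

Lemma W_poly_sq s P : W_poly s (P \mPo squares R d) = P \mPo squares R d.
Proof.
rewrite /W_poly comp_mpolyA.
have -> : [tuple tnth (squares R d) i \mPo [tuple coord_sign s i0 *: 'X_i0 | i0 < d] | i < d]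
   = squares R d.
  apply: eq_from_tnth => i.
  rewrite tnth_map tnth_ord_tuple /squares tnth_map tnth_ord_tuple rmorphXn /=.
  by rewrite comp_mpolyXU -tnth_nth tnth_map tnth_ord_tuple exprZn expr2 coord_sign_sq scale1r.
by [].
Qed.

Definition s1 (i : 'I_d) : {ffun 'I_d -> bool} := [ffun j : 'I_d => (j <= i)%N].

Lemma coord_sign_s1 i j : coord_sign (s1 i) j = e1 i j.
Proof.
rewrite /coord_sign /W_sign /e1 !ffunE.
case: ifP => Hj.
  rewrite val_insubd Hj -val_eqE /=.
  case: (ltngtP j i) => H.
  - by rewrite expr1 mulrNN mulr1.
  - by rewrite expr0 mulr1.
  - by rewrite expr1 expr0 mulr1.
have Hji : (i <= j)%N.
 move/negbT: Hj; rewrite -leqNgt => Hj; move: (ltn_ord i) (ltn_ord j) Hj; change (\val j) with (nat_of_ord j); lia.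
rewrite -val_eqE /=; case: (ltngtP j i) => H.
- by move: H Hji; lia.
- by rewrite expr0.
- by rewrite expr1.
Qed.



Lemma invariant_sq f : (forall s, W_poly s f = f) -> exists P, f = P \mPo squares R d.
Proof.
move=> H; apply: even_poly => i.
transitivity (W_poly (s1 i) f); last exact: H.
rewrite /W_poly -/(flip _ _); apply: flip_ext => j.
by rewrite coord_sign_s1.
Qed.


Lemma W_poly_prod t (P : pred {ffun 'I_d -> bool}) (F : {ffun 'I_d -> bool} -> {mpoly C[d]}) :
  W_poly t (\prod_(s | P s) F s) = \prod_(s | P s) W_poly t (F s).
Proof. by rewrite /W_poly rmorph_prod. Qed.

Lemma sxor_inj t : injective (fun s => sxor s t).
Proof.
move=> s s' /= E; apply/ffunP => i.
by have := congr1 (fun f : {ffun 'I_d -> bool} => f i (+) t i) E; rewrite /= !ffunE !addbK.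
Qed.

Lemma prod_inv t q :
  W_poly t (\prod_(s : {ffun 'I_d -> bool}) W_poly s q) = \prod_(s : {ffun 'I_d -> bool}) W_poly s q.
Proof.
rewrite W_poly_prod.
transitivity (\prod_(s : {ffun 'I_d -> bool}) W_poly (sxor s t) q).
  by apply: eq_bigr => s _; exact: W_poly_comp.
symmetry.
exact: (@reindex_inj _ _ _ _ (fun s => sxor s t) xpredT (fun s => W_poly s q) (@sxor_inj t)).
Qed.

Lemma inv_of_fixed s (p q A B : {mpoly C[d]}) :
  W_poly s A = A -> W_poly s B = B -> A != 0 -> p * A = q * B ->
  W_poly s p * q = p * W_poly s q.
Proof.
move=> HA HB A0 HE.
have E : W_poly s (p * A) = W_poly s (q * B) by rewrite HE.
rewrite !W_polyM HA HB in E.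
apply: (mulIf A0).
rewrite mulrAC E -mulrA [B * _]mulrC -HE.
by rewrite mulrCA mulrA.
Qed.

Lemma part2 (p q : {mpoly C[d]}) : q != 0 ->
  (W_invariant_rat p q <-> in_field_of_squares p q).
Proof.
move=> Hq; split.
  move=> Hinv.
  pose s0 : {ffun 'I_d -> bool} := [ffun => false].
  pose Nn := \prod_(s : {ffun 'I_d -> bool}) W_poly s q.
  pose M := p * \prod_(s | s != s0) W_poly s q.
  have Hq0 : W_poly s0 q = q.
    rewrite /W_poly -/(flip _ _); apply: flip1 => i.
    by rewrite /coord_sign /W_sign !ffunE expr0 mulr1; case: ifP.
  have HN : p * Nn = q * M by rewrite /Nn (bigD1 s0) // Hq0 /M mulrCA.
  have Nn0 : Nn != 0.
    rewrite /Nn; apply: (big_ind (fun x => x != 0)).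
    - exact: oner_neq0.
    - by move=> x y; apply: mulf_neq0.
    - by move=> s _; apply: W_poly_neq0.
  have NnI : forall t, W_poly t Nn = Nn.
    move=> t; exact: prod_inv.
  clearbody Nn M.
  have MI : forall t, W_poly t M = M.
    move=> t; have E := congr1 (W_poly t) HN; rewrite !W_polyM NnI in E.
    have Ht := Hinv t.
    apply: (mulfI (W_poly_neq0 t Hq)); apply: (mulfI Hq).
    rewrite -E mulrA [q * _]mulrC mulrAC Ht mulrAC HN.
    by rewrite mulrAC.
  have [Q HQ] := invariant_sq NnI.
  have [P HP] := invariant_sq MI.
  by exists P, Q; rewrite -HQ -HP; split.
move=> [P [Q [HQ0 HE]]] s.
exact: (inv_of_fixed (W_poly_sq s Q) (W_poly_sq s P) HQ0 HE).
Qed.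

End A.

Section B.
Variables (R : realType) (d : nat).
Local Notation C := (CC R).
Local Notation W_sign := (@W_sign R d).
Local Notation coord_sign := (@coord_sign R d).
Local Notation W_mat := (@W_mat R d).

Lemma W_sign_sq' s i : W_sign s i * W_sign s i = 1 :> C.
Proof. by rewrite /W_sign -signr_addb addbb. Qed.

Lemma coord_sign_sq' s i : coord_sign s i * coord_sign s i = 1 :> C.
Proof.
rewrite /coord_sign; case: ifP => _; last exact: W_sign_sq'.
by rewrite mulrACA !W_sign_sq' mulr1.
Qed.

Lemma Wv_entry s (v : 'cV[C]_d) i : (W_mat s *m v) i 0 = W_sign s i * v i 0.
Proof. by rewrite /W_mat mul_diag_mx !mxE. Qed.

Lemma WM_entry s (M : 'M[C]_d) i j :
  (W_mat s *m M *m (W_mat s)^T) i j = W_sign s i * M i j * W_sign s j.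
Proof. by rewrite /W_mat tr_diag_mx mul_mx_diag mul_diag_mx !mxE. Qed.

Lemma Wact_eq s (c c' : 'I_d -> C) :
  L_pt c' = W_act s (L_pt c) <-> forall i, c' i = coord_sign s i * c i.
Proof.
split.
  move=> E i; case: E => E1 E2.
  rewrite /coord_sign; case: ifP => Hi.
    set j := insubd i (val i).+1.
    have Hj : val j = (val i).+1 by rewrite val_insubd Hi.
    have := congr1 (fun M : 'M[C]_d => M i j) E2.
    rewrite WM_entry /L_mat !mxE Hj eqxx => ->.
    by rewrite mulrAC.
  have Hi' : val i = d.-1 by move/negbT: Hi; rewrite -leqNgt => Hi; move: (ltn_ord i) Hi; change (\val i) with (nat_of_ord i); lia.
  have := congr1 (fun v : 'cV[C]_d => v i 0) E1.
  by rewrite Wv_entry /L_vec !mxE Hi' eqxx.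
move=> H; rewrite /L_pt /W_act /=; congr pair; apply/matrixP => i j.
  rewrite (ord1 j) Wv_entry /L_vec !mxE.
  case: eqP => Hi; last by rewrite mulr0.
  rewrite H /coord_sign.
  have -> : ((val i).+1 < d)%N = false by apply/negbTE; rewrite -leqNgt Hi leqSpred.
  by [].
rewrite WM_entry /L_mat !mxE.
case: eqP => Hji.
  rewrite H /coord_sign.
  have Hi : ((val i).+1 < d)%N by rewrite -Hji ltn_ord.
  rewrite Hi; have -> : insubd i (val i).+1 = j by apply: val_inj; rewrite val_insubd Hi.
  by rewrite mulrAC.
case: eqP => Hij; last by rewrite mulr0 mul0r.
rewrite H /coord_sign.
have Hj : ((val j).+1 < d)%N by rewrite -Hij ltn_ord.
rewrite Hj; have -> : insubd j (val j).+1 = i by apply: val_inj; rewrite val_insubd Hj.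
rewrite mulrN mulNr; congr (- _); rewrite [RHS]mulrAC; congr (_ * _); exact: mulrC.
Qed.

Lemma exists_s (b : 'I_d -> bool) :
  exists s : {ffun 'I_d -> bool}, forall i, coord_sign s i = (-1) ^+ b i.
Proof.
pose S (j : 'I_d) := (\sum_(k < d | (j <= k)%N) (b k : nat))%N.
exists [ffun j => odd (S j)] => j.
have sq1 : forall n, (-1) ^+ n * (-1) ^+ n = 1 :> C.
  by move=> n; rewrite -signr_odd -signr_addb addbb.
rewrite /coord_sign /W_sign !ffunE !signr_odd.
case: ifP => Hj.
  set j' := insubd j (val j).+1.
  have Hj' : val j' = (val j).+1 by rewrite val_insubd Hj.
  have -> : S j = (b j + S j')%N.
    rewrite /S (bigD1 j) //=; congr (_ + _)%N; apply: eq_bigl => k.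
    rewrite Hj' -val_eqE /=; case: (ltngtP j k) => //.
  by rewrite exprD -mulrA sq1 mulr1.
have -> : S j = b j.
  rewrite /S (bigD1 j) //= big1 ?addn0 // => k /andP [Hk Hne].
  exfalso; move: Hne; rewrite -val_eqE /=.
  move/negbT: Hj; rewrite -leqNgt => Hj; move: (ltn_ord k) Hk Hj.
  change (\val j) with (nat_of_ord j); change (\val k) with (nat_of_ord k).
  move=> a b' c; apply/negP/negPn/eqP; lia.
by [].
Qed.

Lemma part1 (c c' : 'I_d -> C) :
  (exists s : {ffun 'I_d -> bool}, L_pt c' = W_act s (L_pt c)) <->
  (forall i, c' i ^+ 2 = c i ^+ 2).
Proof.
split.
  move=> [s /Wact_eq H] i.
  by rewrite H exprMn expr2 coord_sign_sq' mul1r.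
move=> H.
have [s Hs] := exists_s (fun i => c' i != c i).
exists s; apply/Wact_eq => i; rewrite Hs.
have := H i; move/eqP; rewrite eqf_sqr => /orP [/eqP E | /eqP E].
  by rewrite E eqxx expr0 mul1r.
case: eqP => [->|_]; first by rewrite expr0 mul1r.
by rewrite expr1 mulN1r.
Qed.

End B.

Unset Implicit Arguments.

Theorem proposition3p10 (R : realType) (d : nat) (hd : (2 <= d)%N) :
  (* separation of orbits on the open set where all coordinates are nonzero *)
  (forall c c' : 'I_d -> CC R,
      (forall i, c i != 0) -> (forall i, c' i != 0) ->
      ((exists s : {ffun 'I_d -> bool}, L_pt c' = W_act s (L_pt c)) <->
       (forall i, c' i ^+ 2 = c i ^+ 2))) /\
  (* the invariant field C(L)^W equals C(c_d^2, c_{(d-1)d}^2, ..., c_{12}^2) *)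
  (forall p q : {mpoly (CC R)[d]}, q != 0 ->
      (W_invariant_rat p q <-> in_field_of_squares p q)).
Proof.
split.
  move=> c c' _ _; exact: part1.
move=> p q Hq; exact: part2.
Qed.
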